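(* Let $X$ be a finite connected poset and $\theta\in\mathcal{M}(X)$. Assume there exist maximal chains $C,D$ of $X$ such that $\theta$ is increasing on $C$ and decreasing on $D$. If $x\in C\cap D$, then $x\in\mathrm{Min}(X)$ or $x\in\mathrm{Max}(X)$.
   Context: $\mathrm{Min}(X)$, $\mathrm{Max}(X)$: minimal and maximal elements. For $x<y$, $e_{xy}$ denotes the incidence-algebra basis element and $B=\{e_{xy}:x<y\}$. For a bijection $\theta:B\to B$ and a maximal chain $C:u_1<\dots<u_m$, $\theta$ is increasing on $C$ if there is a maximal chain $D:v_1<\dots<v_m$ with $\theta(e_{u_iu_j})=e_{v_iv_j}$ for all $i<j$, decreasing if $\theta(e_{u_iu_j})=e_{v_{m-j+1}v_{m-i+1}}$ for all $i<j$. $\mathcal{M}(X)$ is the set of bijections $B\to B$ increasing or decreasing on every maximal chain. *)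

(* Defs.v *)
From HB Require Import structures.
From mathcomp Require Import all_boot all_order.
Set Implicit Arguments. Unset Strict Implicit. Unset Printing Implicit Defensive.
Import Order.TTheory.
Local Open Scope order_scope.

(* the basis B = { e_xy : x < y } of the incidence algebra, e_xy identified
   with the pair (x, y) *)
Definition Bas {disp : Order.disp_t} (X : finPOrderType disp) :=
  {p : X * X | p.1 < p.2}.

Definition is_chain {disp : Order.disp_t} {X : finPOrderType disp}
  (A : {set X}) : bool := [forall x in A, forall y in A, x >=< y].

Definition max_chain {disp : Order.disp_t} {X : finPOrderType disp}
  (s : seq X) : Prop :=
  sorted <%O s /\ maxset is_chain [set x in s].

Definition in_Min {disp : Order.disp_t} {X : finPOrderType disp} (x : X) : Prop :=
  forall y : X, ~ (y < x).
Definition in_Max {disp : Order.disp_t} {X : finPOrderType disp} (x : X) : Prop :=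
  forall y : X, ~ (x < y).

Definition connected_poset {disp : Order.disp_t} (X : finPOrderType disp) : Prop :=
  forall x y : X, connect (fun a b => a >=< b) x y.

(* theta increasing on the maximal chain C = u_1 < ... < u_m (0-indexed here):
   there is a maximal chain D : v_1 < ... < v_m with theta(e_{u_i u_j}) = e_{v_i v_j} *)
Definition increasing_on {disp : Order.disp_t} {X : finPOrderType disp}
  (theta : Bas X -> Bas X) (C : seq X) : Prop :=
  exists D : seq X, max_chain D /\ size D = size C /\
    forall (x0 : X) (i j : nat) (b : Bas X), (i < j < size C)%N ->
      val b = (nth x0 C i, nth x0 C j) ->
      val (theta b) = (nth x0 D i, nth x0 D j).

(* theta decreasing on C: theta(e_{u_i u_j}) = e_{v_{m-j+1} v_{m-i+1}}
   (0-indexed: v_{m-1-j}, v_{m-1-i}) *)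
Definition decreasing_on {disp : Order.disp_t} {X : finPOrderType disp}
  (theta : Bas X -> Bas X) (C : seq X) : Prop :=
  exists D : seq X, max_chain D /\ size D = size C /\
    forall (x0 : X) (i j : nat) (b : Bas X), (i < j < size C)%N ->
      val b = (nth x0 C i, nth x0 C j) ->
      val (theta b) = (nth x0 D (size C - 1 - j), nth x0 D (size C - 1 - i)).

Definition in_M {disp : Order.disp_t} {X : finPOrderType disp}
  (theta : Bas X -> Bas X) : Prop :=
  bijective theta /\
  forall C : seq X, max_chain C -> increasing_on theta C \/ decreasing_on theta C.

(* Main.v *)
Require Import Defs.
From HB Require Import structures.
From mathcomp Require Import all_boot all_order.
Import Order.TTheory.

Section Helpers.
Context {disp : Order.disp_t} {X : finPOrderType disp}.
Implicit Types (s : seq X) (p q r w y z : X).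

Lemma ltnth s x0 i j : sorted <%O s -> (i < j < size s)%N ->
  (nth x0 s i < nth x0 s j)%O.
Proof.
move=> hs /andP[ij js].
apply: (sorted_ltn_nth (@lt_trans _ X)) => //; rewrite inE //.
exact: ltn_trans ij js.
Qed.

Lemma idx_lt s p q : sorted <%O s -> p \in s -> q \in s -> (p < q)%O ->
  (index p s < index q s)%N.
Proof.
move=> hs ps qs pq; rewrite ltnNge; apply/negP => qp.
move: qp; rewrite leq_eqVlt => /orP[/eqP e|lt].
  have : nth p s (index q s) = nth p s (index p s) by rewrite e.
  rewrite !nth_index // => eqp; by rewrite eqp ltxx in pq.
have := @ltnth s p (index q s) (index p s) hs.
rewrite lt /= index_mem ps => /(_ isT).
rewrite nth_index // nth_index // => /lt_trans /(_ pq); by rewrite ltxx.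
Qed.
Arguments idx_lt {s p q}.

Lemma first_le s x0 w : sorted <%O s -> w \in s -> (nth x0 s 0 <= w)%O.
Proof.
move=> hs ws; have := nth_index x0 ws.
case e: (index w s) => [|k] <-; first by [].
apply: ltW; apply: ltnth => //; rewrite -e index_mem ws andbT; by rewrite e.
Qed.

Lemma last_ge s x0 w : sorted <%O s -> w \in s -> (w <= nth x0 s (size s - 1))%O.
Proof.
move=> hs ws; have := nth_index x0 ws; have := ws; rewrite -index_mem => ilt.
have [e|ne] := eqVneq (index w s) (size s - 1).
  by rewrite e => ->.
move=> <-; apply: ltW; apply: ltnth => //.
apply/andP; split; last by case: (size s) ilt => // n _; rewrite subn1 ltnSn.
by move: ilt ne; case: (size s) => // n; rewrite subn1 /= ltnS leq_eqVlt => /orP[->|].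
Qed.

Lemma chain_min s y : max_chain s -> y \in s -> (forall w, w \in s -> (y <= w)%O) ->
  in_Min y.
Proof.
move=> [hs /maxsetP [_ hmax]] ys hle z zy.
have hB : is_chain (z |: [set x in s]).
  apply/forallP => a; apply/implyP => ha; apply/forallP => b; apply/implyP => hb.
  move: ha hb; rewrite !inE => /orP[/eqP->|as'] /orP[/eqP->|bs].
  - exact: comparablexx.
  - by apply/orP; left; apply: ltW; apply: lt_le_trans zy (hle _ bs).
  - by apply/orP; right; apply: ltW; apply: lt_le_trans zy (hle _ as').
  - have [e|ne] := eqVneq a b; first by rewrite e comparablexx.
    apply/orP.
    case: (ltngtP (index a s) (index b s)) => c.
    + left; apply: ltW; rewrite -(nth_index a as') -(nth_index a bs).
      by apply: ltnth => //; rewrite c index_mem bs.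
    + right; apply: ltW; rewrite -(nth_index a as') -(nth_index a bs).
      by apply: ltnth => //; rewrite c index_mem as'.
    + by move: ne; rewrite -(nth_index a as') -(nth_index a bs) c eqxx.
have := hmax _ hB (subsetUr _ _) => e.
have : z \in [set x in s] by rewrite -e !inE eqxx.
rewrite inE => /hle yz; have := le_lt_trans yz zy; by rewrite ltxx.
Qed.

Lemma chain_max s y : max_chain s -> y \in s -> (forall w, w \in s -> (w <= y)%O) ->
  in_Max y.
Proof.
move=> [hs /maxsetP [_ hmax]] ys hle z zy.
have hB : is_chain (z |: [set x in s]).
  apply/forallP => a; apply/implyP => ha; apply/forallP => b; apply/implyP => hb.
  move: ha hb; rewrite !inE => /orP[/eqP->|as'] /orP[/eqP->|bs].
  - exact: comparablexx.
  - by apply/orP; right; apply: ltW; apply: le_lt_trans (hle _ bs) zy.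
  - by apply/orP; left; apply: ltW; apply: le_lt_trans (hle _ as') zy.
  - have [e|ne] := eqVneq a b; first by rewrite e comparablexx.
    apply/orP.
    case: (ltngtP (index a s) (index b s)) => c.
    + left; apply: ltW; rewrite -(nth_index a as') -(nth_index a bs).
      by apply: ltnth => //; rewrite c index_mem bs.
    + right; apply: ltW; rewrite -(nth_index a as') -(nth_index a bs).
      by apply: ltnth => //; rewrite c index_mem as'.
    + by move: ne; rewrite -(nth_index a as') -(nth_index a bs) c eqxx.
have := hmax _ hB (subsetUr _ _) => e.
have : z \in [set x in s] by rewrite -e !inE eqxx.
rewrite inE => /hle yz; have := le_lt_trans yz zy; by rewrite ltxx.
Qed.

Arguments chain_min {s y}.
Arguments chain_max {s y}.

Lemma ext_chain (A : {set X}) : is_chain A ->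
  exists E, max_chain E /\ A \subset [set x in E].
Proof.
move=> hA; have [M hM AM] := maxset_exists hA.
have Mc : is_chain M by move/maxsetP: hM => [].
have tot : {in mem M &, total (<=%O : rel X)}.
  move=> a b ha hb; by move/forallP: Mc => /(_ a); rewrite ha /= => /forallP /(_ b); rewrite hb.
set E := sort <=%O (enum M).
have eq : [set x in E] = M by apply/setP => z; rewrite inE mem_sort mem_enum.
exists E; split; last by rewrite eq.
split; last by rewrite eq.
rewrite lt_sorted_uniq_le sort_uniq enum_uniq /=.
apply: (sort_sorted_in tot); apply/allP => z; by rewrite mem_enum.
Qed.

Lemma L_inc (theta : Bas X -> Bas X) E p q r (b1 b2 : Bas X) :
  increasing_on theta E -> sorted <%O E -> p \in E -> q \in E -> r \in E ->
  (p < q)%O -> (q < r)%O -> val b1 = (p, q) -> val b2 = (q, r) ->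
  (val (theta b1)).2 = (val (theta b2)).1.
Proof.
move=> [F [_ [_ hF]]] hs pE qE rE pq qr e1 e2.
have i1 := idx_lt hs pE qE pq; have i2 := idx_lt hs qE rE qr.
have ri : (index r E < size E)%N by rewrite index_mem.
rewrite (hF p (index p E) (index q E) b1); last by rewrite !nth_index.
  rewrite (hF p (index q E) (index r E) b2) //; last by rewrite !nth_index.
  by rewrite i2 ri.
by rewrite i1 (ltn_trans i2 ri).
Qed.

Lemma L_dec (theta : Bas X -> Bas X) E p q r (b1 b2 : Bas X) :
  decreasing_on theta E -> sorted <%O E -> p \in E -> q \in E -> r \in E ->
  (p < q)%O -> (q < r)%O -> val b1 = (p, q) -> val b2 = (q, r) ->
  (val (theta b1)).1 = (val (theta b2)).2.
Proof.
move=> [F [_ [_ hF]]] hs pE qE rE pq qr e1 e2.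
have i1 := idx_lt hs pE qE pq; have i2 := idx_lt hs qE rE qr.
have ri : (index r E < size E)%N by rewrite index_mem.
rewrite (hF p (index p E) (index q E) b1); last by rewrite !nth_index.
  rewrite (hF p (index q E) (index r E) b2) //; last by rewrite !nth_index.
  by rewrite i2 ri.
by rewrite i1 (ltn_trans i2 ri).
Qed.

Arguments L_inc {theta E p q r b1 b2}.
Arguments L_dec {theta E p q r b1 b2}.

Lemma triple (theta : Bas X -> Bas X) p q r (b1 b2 : Bas X) :
  in_M theta -> (p < q)%O -> (q < r)%O -> val b1 = (p, q) -> val b2 = (q, r) ->
  (val (theta b1)).2 = (val (theta b2)).1 \/ (val (theta b1)).1 = (val (theta b2)).2.
Proof.
move=> [_ hM] pq qr e1 e2.
have pr := lt_trans pq qr.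
have hA : is_chain [set p; q; r].
  apply/forallP => a; apply/implyP; rewrite !inE => ha.
  apply/forallP => b; apply/implyP; rewrite !inE => hb.
  by move: ha hb => /orP[/orP[]|] /eqP-> /orP[/orP[]|] /eqP->;
    rewrite ?comparablexx // /Order.comparable ?(ltW pq) ?(ltW qr) ?(ltW pr) ?orbT.
have [E [hE sub]] := ext_chain _ hA.
have mem a : a \in [set p; q; r] -> a \in E.
  by move=> ha; move/subsetP: sub => /(_ a ha); rewrite inE.
have pE : p \in E by apply: mem; rewrite !inE eqxx.
have qE : q \in E by apply: mem; rewrite !inE eqxx orbT.
have rE : r \in E by apply: mem; rewrite !inE eqxx !orbT.
case: (hM E hE) => h; [left; exact: (L_inc h hE.1 pE qE rE pq qr e1 e2)
                      |right; exact: (L_dec h hE.1 pE qE rE pq qr e1 e2)].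
Qed.

End Helpers.
Arguments idx_lt {disp X s p q}.
Arguments chain_min {disp X s y}.
Arguments chain_max {disp X s y}.
Arguments L_inc {disp X theta E p q r b1 b2}.
Arguments L_dec {disp X theta E p q r b1 b2}.
Arguments ext_chain {disp X}.
Arguments triple {disp X theta p q r b1 b2}.

Theorem lemma3p4 (disp : Order.disp_t) (X : finPOrderType disp)
  (theta : Bas X -> Bas X) (C D : seq X) (x : X) :
  connected_poset X -> in_M theta ->
  max_chain C -> max_chain D ->
  increasing_on theta C -> decreasing_on theta D ->
  x \in C -> x \in D ->
  in_Min x \/ in_Max x.
Proof.
move=> _ hM hC hD incC decD xC xD.
case: (boolP [exists y, (y < x)%O]) => [/existsP [y1 y1x]|nmin]; last first.
  left => y yx; move/negP: nmin; apply; apply/existsP; by exists y.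
case: (boolP [exists y, (x < y)%O]) => [/existsP [y2 xy2]|nmax]; last first.
  right => y yx; move/negP: nmax; apply; apply/existsP; by exists y.
have notmin : ~ in_Min x by move=> h; exact: h y1 y1x.
have notmax : ~ in_Max x by move=> h; exact: h y2 xy2.
have sC := hC.1; have sD := hD.1.
have szC : (0 < size C)%N by case: (C) xC.
have szD : (0 < size D)%N by case: (D) xD.
have lastC : (size C - 1 < size C)%N by rewrite subn1 prednK // ltnSn.
have lastD : (size D - 1 < size D)%N by rewrite subn1 prednK // ltnSn.
set u0 := nth x C 0; set uL := nth x C (size C - 1).
set w0 := nth x D 0; set wL := nth x D (size D - 1).
have u0C : u0 \in C by apply: mem_nth.
have uLC : uL \in C by apply: mem_nth.
have w0D : w0 \in D by apply: mem_nth.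
have wLD : wL \in D by apply: mem_nth.
have hux : (u0 < x)%O.
  rewrite lt_neqAle first_le // andbT; apply/negP => /eqP e; apply: notmin.
  apply: (chain_min hC xC) => w wC; rewrite -e; exact: first_le.
have hxu : (x < uL)%O.
  rewrite lt_neqAle last_ge // andbT; apply/negP => /eqP e; apply: notmax.
  apply: (chain_max hC xC) => w wC; rewrite e; exact: last_ge.
have hwx : (w0 < x)%O.
  rewrite lt_neqAle first_le // andbT; apply/negP => /eqP e; apply: notmin.
  apply: (chain_min hD xD) => w wD; rewrite -e; exact: first_le.
have hxw : (x < wL)%O.
  rewrite lt_neqAle last_ge // andbT; apply/negP => /eqP e; apply: notmax.
  apply: (chain_max hD xD) => w wD; rewrite e; exact: last_ge.
pose a : Bas X := exist _ (u0, x) hux.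
pose b : Bas X := exist _ (x, uL) hxu.
pose c : Bas X := exist _ (w0, x) hwx.
pose d : Bas X := exist _ (x, wL) hxw.
have H1 := L_inc incC sC u0C xC uLC hux hxu (erefl (val a)) (erefl (val b)).
have H3 := triple hM hux hxw (erefl (val a)) (erefl (val d)).
have H4 := triple hM hwx hxu (erefl (val c)) (erefl (val b)).
have uD : uniq D by move: sD; rewrite lt_sorted_uniq_le => /andP[].
case: decD => Z [hZ [szZ hZf]].
set l := index x D.
have l0 : (0 < l)%N.
  have := idx_lt sD w0D xD hwx; by rewrite /w0 index_uniq.
have lL : (l < size D - 1)%N.
  have := idx_lt sD xD wLD hxw; by rewrite /wL index_uniq.
have ec : val (theta c) = (nth x Z (size D - 1 - l), nth x Z (size D - 1 - 0)).
  apply: hZf; first by rewrite l0 /l index_mem.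
  by rewrite /= nth_index.
have ed : val (theta d) = (nth x Z (size D - 1 - (size D - 1)), nth x Z (size D - 1 - l)).
  apply: hZf; first by rewrite lL lastD.
  by rewrite /= nth_index.
rewrite subn0 subnn in ec ed.
have szZ0 : (0 < size Z)%N by rewrite szZ.
have Zmin : in_Min (nth x Z 0).
  apply: (chain_min hZ); first exact: mem_nth.
  move=> w; exact: first_le hZ.1.
have Zmax : in_Max (nth x Z (size D - 1)).
  apply: (chain_max hZ); first by apply: mem_nth; rewrite szZ.
  move=> w wZ; rewrite -szZ; exact: last_ge hZ.1 wZ.
have Pa := valP (theta a); have Pb := valP (theta b).
have Pc := valP (theta c); have Pd := valP (theta d).
move: Pa Pb Pc Pd H1 H3 H4 Zmin Zmax.
rewrite ec ed /=.
case: (val (theta a)) => A1 A2; case: (val (theta b)) => B1 B2 /=.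
move=> Pa Pb Pc Pd H1 H3 H4 Zmin Zmax; exfalso.
case: H3 => H3; case: H4 => H4.
- have := lt_trans Pd Pc; by rewrite H4 -H1 -H3 ltxx.
- by apply: (Zmin A1); rewrite -H3.
- by apply: (Zmax B2); rewrite H4.
- move: Pb; rewrite -H1 -H4 -H3 => Pb; have := lt_trans Pa Pb; by rewrite ltxx.
Qed.
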